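(* Let $\Omega$ be a verification operator for $|\Psi\rangle$ with second largest eigenvalue $\beta$ and smallest eigenvalue $\tau$, and take $N=1$. If $\beta\ge1/2$, then $$\zeta(1,\delta,\Omega)=\begin{cases}0,&0\le\delta\le\beta,\\ \frac{\beta(\delta-\beta)}{1-\beta},&\beta\le\delta\le\frac{1+\beta}{2},\\ \frac{\delta(2-\beta)-1}{1-\beta},&\frac{1+\beta}{2}\le\delta\le1.\end{cases}$$ If $\beta<1/2$, then $$\zeta(1,\delta,\Omega)=\begin{cases}0,&0\le\delta\le\beta,\\ \frac{\tau(\delta-\beta)}{1+\tau-2\beta},&\beta\le\delta\le\frac{1+\tau}{2},\\ \delta-\frac12,&\frac{1+\tau}{2}\le\delta\le\frac{1+\beta}{2},\\ \frac{\delta(2-\beta)-1}{1-\beta},&\frac{1+\beta}{2}\le\delta\le1.\end{cases}$$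
   Context: Let $\mathcal H$ be a Hilbert space of finite dimension $D\ge2$ and $|\Psi\rangle\in\mathcal H$ a unit vector. A verification operator for $|\Psi\rangle$ is a Hermitian operator $\Omega$ on $\mathcal H$ with $0\le\Omega\le1$, $\Omega|\Psi\rangle=|\Psi\rangle$, whose eigenvalue $1$ is nondegenerate; its eigenvalues are $1=\lambda_1>\lambda_2\ge\dots\ge\lambda_D\ge0$, with $\beta=\lambda_2$, $\tau=\lambda_D$. For an integer $N\ge1$ and a density operator $\rho$ on $\mathcal H^{\otimes(N+1)}$ put $p_\rho=\mathrm{tr}[(\Omega^{\otimes N}\otimes 1)\rho]$ and $f_\rho=\mathrm{tr}[(\Omega^{\otimes N}\otimes|\Psi\rangle\langle\Psi|)\rho]$, and $\zeta(N,\delta,\Omega)=\min\{f_\rho:p_\rho\ge\delta\}$ for $0\le\delta\le1$, the minimum over permutation-invariant density operators on $\mathcal H^{\otimes(N+1)}$. *)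

(* Defs.v *)
From mathcomp Require Import all_boot all_order all_algebra.
From mathcomp Require Import reals.
From mathcomp.real_closed Require Import complex mxtens.

Set Implicit Arguments.
Unset Strict Implicit.
Unset Printing Implicit Defensive.

Import Order.TTheory GRing.Theory Num.Theory.
Local Open Scope ring_scope.
Local Open Scope complex_scope.

Section QDefs.
Variable C : numClosedFieldType.

Definition mxadj {m n : nat} (A : 'M[C]_(m, n)) : 'M[C]_(n, m) :=
  (map_mx Num.conj A)^T.

Definition hermitian {n : nat} (A : 'M[C]_n) : Prop := mxadj A = A.

Definition psdmx {n : nat} (A : 'M[C]_n) : Prop :=
  hermitian A /\ forall v : 'cV[C]_n, 0 <= (mxadj v *m A *m v) 0 0.

Definition verification_operator {D : nat} (Omega : 'M[C]_D) (Psi : 'cV[C]_D) : Prop :=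
  [/\ hermitian Omega, psdmx Omega, psdmx (1 - Omega),
      Omega *m Psi = Psi &
      forall v : 'cV[C]_D, Omega *m v = v -> exists c : C, v = c *: Psi].

Definition densitymx {n : nat} (rho : 'M[C]_n) : Prop := psdmx rho /\ \tr rho = 1.

(* swap operator on H (x) H (Kronecker convention of mxtens):
   swapmx (e_k (x) e_l) = e_l (x) e_k *)
Definition swapmx (D : nat) : 'M[C]_(D * D) :=
  \matrix_(a, b) (((mxtens_unindex a).1 == (mxtens_unindex b).2) &&
                  ((mxtens_unindex a).2 == (mxtens_unindex b).1))%:R.

(* permutation-invariant operator on H^{(x) 2} (the only nontrivial permutation
   of 2 tensor factors is the swap) *)
Definition perm_invariant2 {D : nat} (rho : 'M[C]_(D * D)) : Prop :=
  swapmx D *m rho *m mxadj (swapmx D) = rho.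

Definition p_rho {D : nat} (Omega : 'M[C]_D) (rho : 'M[C]_(D * D)) : C :=
  \tr ((Omega *t (1%:M : 'M[C]_D)) *m rho).

Definition f_rho {D : nat} (Omega : 'M[C]_D) (Psi : 'cV[C]_D) (rho : 'M[C]_(D * D)) : C :=
  \tr ((Omega *t (Psi *m mxadj Psi)) *m rho).

Definition feasible1 {D : nat} (Omega : 'M[C]_D) (delta : C) (rho : 'M[C]_(D * D)) : Prop :=
  [/\ densitymx rho, perm_invariant2 rho & delta <= p_rho Omega rho].

(* "zeta(1, delta, Omega) = z": the minimum of f_rho over permutation-invariant
   density operators with p_rho >= delta exists and equals z *)
Definition zeta1_is {D : nat} (Omega : 'M[C]_D) (Psi : 'cV[C]_D) (delta z : C) : Prop :=
  (exists2 rho, feasible1 Omega delta rho & f_rho Omega Psi rho = z) /\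
  (forall rho, feasible1 Omega delta rho -> z <= f_rho Omega Psi rho).

End QDefs.

Definition sorted_spectrum (R : realType) {D : nat} (Omega : 'M[R[i]]_D)
    (lam : nat -> R) : Prop :=
  char_poly Omega = \prod_(k < D) ('X - ((lam k)%:C)%:P) /\
  (forall j k : nat, (j <= k)%N -> (k < D)%N -> lam k <= lam j).

(* Main.v *)
Require Import Defs.
From mathcomp Require Import all_boot all_order all_algebra.
From mathcomp Require Import reals.
From mathcomp.real_closed Require Import complex mxtens.
From mathcomp Require Import ring lra.
Import Order.TTheory GRing.Theory Num.Theory.
Local Open Scope ring_scope.

Set Implicit Arguments.
Unset Strict Implicit.
Unset Printing Implicit Defensive.


Section Gen.
Variable C : numClosedFieldType.

Lemma mxadjE m n (A : 'M[C]_(m, n)) i j : mxadj A i j = Num.conj (A j i).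
Proof. by rewrite /mxadj !mxE. Qed.

Lemma mxadjK m n (A : 'M[C]_(m, n)) : mxadj (mxadj A) = A.
Proof. by apply/matrixP => i j; rewrite !mxadjE conjCK. Qed.

Lemma mxadjM m n p (A : 'M[C]_(m, n)) (B : 'M[C]_(n, p)) :
  mxadj (A *m B) = mxadj B *m mxadj A.
Proof.
apply/matrixP => i j; rewrite mxadjE !mxE rmorph_sum; apply: eq_bigr => k _.
by rewrite !mxadjE rmorphM mulrC.
Qed.

Lemma mxadjD m n (A B : 'M[C]_(m, n)) : mxadj (A + B) = mxadj A + mxadj B.
Proof. by apply/matrixP => i j; rewrite !mxE rmorphD. Qed.

Lemma mxadj1 n : mxadj (1%:M : 'M[C]_n) = 1%:M.
Proof.
apply/matrixP => i j; rewrite mxadjE !mxE eq_sym.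
by rewrite conjC_nat.
Qed.

Lemma mxadj_tens m n p q (A : 'M[C]_(m, n)) (B : 'M[C]_(p, q)) :
  mxadj (A *t B) = mxadj A *t mxadj B.
Proof. by apply/matrixP => i j; rewrite !mxE rmorphM. Qed.

Lemma tens1mx1 m n : (1%:M : 'M[C]_m) *t (1%:M : 'M[C]_n) = 1%:M.
Proof.
apply/matrixP => i j.
case: (mxtens_indexP i) => a b; case: (mxtens_indexP j) => a' b'.
rewrite tensmxE !mxE -natrM mulnb.
suff -> : (mxtens_index (a, b) == mxtens_index (a', b')) = ((a == a') && (b == b')) by [].
apply/idP/idP.
- by move/eqP => /(congr1 (@mxtens_unindex m n)); rewrite !mxtens_indexK => -[-> ->]; rewrite !eqxx.
- by case/andP => /eqP -> /eqP ->.
Qed.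

Lemma tr_diag_mul n (X M : 'M[C]_n) :
  (forall i j, i != j -> X i j = 0) -> \tr (X *m M) = \sum_i X i i * M i i.
Proof.
move=> Xd; rewrite /mxtrace; apply: eq_bigr => i _; rewrite mxE.
rewrite (bigD1 i) //= big1 ?addr0 // => j /negbTE ji.
by rewrite Xd ?mul0r // eq_sym ji.
Qed.

Lemma sum_tens m n (F : 'I_(m * n) -> C) :
  \sum_(x < m * n) F x = \sum_(a < m) \sum_(b < n) F (mxtens_index (a, b)).
Proof.
rewrite (reindex (@mxtens_index m n)) /=; last first.
  by exists (@mxtens_unindex m n) => x _; rewrite ?mxtens_indexK ?mxtens_unindexK.
by rewrite pair_big; apply: eq_bigr => -[a b] _.
Qed.


Lemma mxadj_delta m n (i : 'I_m) (j : 'I_n) : mxadj (delta_mx i j : 'M[C]_(m, n)) = delta_mx j i.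
Proof. by apply/matrixP => a b; rewrite !mxE conjC_nat andbC. Qed.

Lemma psd_diag n (M : 'M[C]_n) i : psdmx M -> 0 <= M i i.
Proof.
case=> _ /(_ (delta_mx i 0)); rewrite mxadj_delta -rowE -colE.
by rewrite !mxE.
Qed.

Lemma psd_conj m n (V : 'M[C]_(m, n)) (M : 'M[C]_n) :
  psdmx M -> psdmx (V *m M *m mxadj V).
Proof.
case=> hM pM; split.
  by rewrite /Defs.hermitian !mxadjM mxadjK hM mulmxA.
move=> v; have := pM (mxadj V *m v).
by rewrite mxadjM mxadjK !mulmxA.
Qed.

Definition swi D (x : 'I_(D * D)) : 'I_(D * D) :=
  mxtens_index ((mxtens_unindex x).2, (mxtens_unindex x).1).

Lemma swiK D : involutive (@swi D).
Proof.
move=> x; apply: (can_inj (@mxtens_unindexK D D)).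
by rewrite /swi !mxtens_indexK; case: (mxtens_unindex x).
Qed.

Lemma swapmxE D x y : swapmx C D x y = (y == swi x)%:R.
Proof.
rewrite !mxE; apply: (congr1 (fun b : bool => b%:R)).
rewrite /swi; apply/idP/idP.
  case/andP => /eqP e1 /eqP e2; apply/eqP.
  by rewrite -[y]mxtens_unindexK e1 e2; case: (mxtens_unindex y).
move/eqP => ->; rewrite mxtens_indexK /= !eqxx //.
Qed.

Lemma swapmx_mull D n (M : 'M[C]_(D * D, n)) x y : (swapmx C D *m M) x y = M (swi x) y.
Proof.
rewrite mxE (bigD1 (swi x)) //= big1 ?addr0; first by rewrite swapmxE eqxx mul1r.
by move=> k /negbTE kn; rewrite swapmxE kn mul0r.
Qed.

Lemma swapmx_mulr D n (M : 'M[C]_(n, D * D)) x y : (M *m swapmx C D) x y = M x (swi y).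
Proof.
rewrite mxE (bigD1 (swi y)) //= big1 ?addr0; first by rewrite swapmxE swiK eqxx mulr1.
move=> k /negbTE kn; rewrite swapmxE.
have -> : (y == swi k) = false.
  by apply/negbTE; apply: contraFN kn => /eqP ->; rewrite swiK.
by rewrite mulr0.
Qed.

Lemma swapmx_tens D (A B : 'M[C]_D) :
  swapmx C D *m (A *t B) = (B *t A) *m swapmx C D.
Proof.
apply/matrixP => x y; rewrite swapmx_mull swapmx_mulr !mxE /swi !mxtens_indexK /=.
by rewrite mulrC.
Qed.

Lemma swapmx_adj D : mxadj (swapmx C D) = swapmx C D.
Proof.
apply/matrixP => x y; rewrite mxadjE !swapmxE conjC_nat.
apply: (congr1 (fun b : bool => b%:R)); apply/eqP/eqP => ->; by rewrite swiK.
Qed.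

Lemma swapmx_inv D : swapmx C D *m swapmx C D = 1%:M.
Proof.
apply/matrixP => x y; rewrite swapmx_mull swapmxE swiK !mxE eq_sym //.
Qed.

End Gen.


Section Spec.
Variable C : numClosedFieldType.

Lemma tstar_adj m n (A : 'M[C]_(m, n)) : (A ^t Num.conj)%sesqui = mxadj A.
Proof. by apply/matrixP => i j; rewrite !mxE. Qed.

Lemma spectral_dec D (Om : 'M[C]_D) : Defs.hermitian Om ->
  exists U : 'M[C]_D, exists d : 'rV[C]_D,
    [/\ U *m mxadj U = 1%:M, mxadj U *m U = 1%:M & Om = mxadj U *m diag_mx d *m U].
Proof.
move=> hO.
have nO : Om \is normalmx by rewrite qualifE tstar_adj hO.
have uP := spectral_unitarymx Om.
have /orthomx_spectralP E := nO.
exists (spectralmx Om), (spectral_diag Om).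
have UU : spectralmx Om *m mxadj (spectralmx Om) = 1%:M.
  by move/unitarymxP: uP; rewrite tstar_adj.
split => //; first exact: mulmx1C.
by rewrite {1}E invmx_unitary // tstar_adj.
Qed.
End Spec.


Section LP.
Variable R : realFieldType.
Variable D : nat.

Definition LL (G q : 'I_D -> 'I_D -> R) := \sum_a \sum_b G a b * q a b.

Definition pm (i j a b : 'I_D) : R := ((a == i) && (b == j))%:R.

Lemma LL_pm G i j : LL G (pm i j) = G i j.
Proof.
rewrite /LL (bigD1 i) //= [X in _ + X]big1 ?addr0.
  rewrite (bigD1 j) //= [X in _ + X]big1 ?addr0; first by rewrite /pm !eqxx mulr1.
  by move=> b /negbTE bj; rewrite /pm bj andbF mulr0.
by move=> a /negbTE ai; apply: big1 => b _; rewrite /pm ai mulr0.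
Qed.

Lemma LL_lin G f g x : LL G (fun a b => x * f a b + g a b) = x * LL G f + LL G g.
Proof.
rewrite /LL big_distrr -big_split; apply: eq_bigr => a _.
rewrite big_distrr -big_split; apply: eq_bigr => b _ /=; ring.
Qed.

Lemma LL_linG G1 G2 x q : LL (fun a b => x * G1 a b + G2 a b) q = x * LL G1 q + LL G2 q.
Proof.
rewrite /LL big_distrr -big_split; apply: eq_bigr => a _.
rewrite big_distrr -big_split; apply: eq_bigr => b _ /=; ring.
Qed.

Lemma LL0G q : LL (fun _ _ => 0) q = 0.
Proof. by rewrite /LL big1 // => a _; rewrite big1 // => b _; rewrite mul0r. Qed.

Lemma LL0 G : LL G (fun _ _ => 0) = 0.
Proof. by rewrite /LL big1 // => a _; rewrite big1 // => b _; rewrite mulr0. Qed.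

Definition Qok (q : 'I_D -> 'I_D -> R) :=
  [/\ forall a b, 0 <= q a b, forall a b, q a b = q b a & LL (fun _ _ => 1) q = 1].

Variable dr : 'I_D -> R.
Variable k0 : 'I_D.

Definition PP q := LL (fun a b => dr a) q.
Definition FF q := LL (fun a b => dr a * (b == k0)%:R) q.

Lemma LL_sym G q : (forall a b, q a b = q b a) -> LL G q = LL (fun a b => G b a) q.
Proof.
move=> qs; rewrite /LL exchange_big /=; apply: eq_bigr => a _; apply: eq_bigr => b _.
by rewrite qs.
Qed.

Lemma LL_ge0 G q : (forall a b, 0 <= q a b) -> (forall a b, 0 <= G a b) -> 0 <= LL G q.
Proof.
move=> q0 G0; apply: sumr_ge0 => a _; apply: sumr_ge0 => b _.
by apply: mulr_ge0.
Qed.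

Lemma LP_dual q kk c0 e0 : Qok q ->
  (forall a b, 0 <= kk * (dr a * (b == k0)%:R + dr b * (a == k0)%:R)
                     - c0 * (dr a + dr b) + 2 * e0) ->
  c0 * PP q - e0 <= kk * FF q.
Proof.
case=> q0 qs q1 hg.
pose h a b := kk * (dr a * (b == k0)%:R) - c0 * dr a + e0.
have E : LL h q = kk * FF q - c0 * PP q + e0.
  have -> : LL h q = LL (fun a b => kk * (dr a * (b == k0)%:R) + ((- c0) * dr a + (e0 * 1 + 0))) q.
    by apply: eq_bigr => a _; apply: eq_bigr => b _; rewrite /h; congr (_ * _); ring.
  rewrite !LL_linG q1 LL0G /FF /PP; ring.
have E2 : LL h q = LL (fun a b => h b a) q by apply: LL_sym.
have : 0 <= LL (fun a b => h a b + h b a) q.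
  apply: LL_ge0 => // a b; rewrite /h.
  by have := hg a b; lra.
have -> : LL (fun a b => h a b + h b a) q = LL h q + LL (fun a b => h b a) q.
  rewrite /LL -big_split; apply: eq_bigr => a _; rewrite -big_split.
  by apply: eq_bigr => b _ /=; ring.
rewrite -E2 E; lra.
Qed.

Variables kb kt : 'I_D.

Definition qmix (xA xC xT xS : R) a b :=
  xA * pm k0 k0 a b + (xC * pm kb kb a b + ((xT / 2) * pm k0 kt a b +
  ((xT / 2) * pm kt k0 a b + ((xS / 2) * pm k0 kb a b + ((xS / 2) * pm kb k0 a b + 0))))).

Lemma LL_qmix G xA xC xT xS : LL G (qmix xA xC xT xS) =
  xA * G k0 k0 + xC * G kb kb + xT / 2 * (G k0 kt + G kt k0) + xS / 2 * (G k0 kb + G kb k0).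
Proof.
rewrite /qmix !LL_lin LL0 !LL_pm; ring.
Qed.


Lemma pmC i j a b : pm i j a b = pm j i b a.
Proof. by rewrite /pm andbC. Qed.

Lemma pm_ge0 i j a b : 0 <= pm i j a b.
Proof. by rewrite /pm ler0n. Qed.

Variables beta tau : R.
Hypothesis dk0 : dr k0 = 1.
Hypothesis dkb : dr kb = beta.
Hypothesis dkt : dr kt = tau.
Hypothesis kb0 : kb != k0.
Hypothesis kt0 : kt != k0.
Hypothesis drb : forall k, k != k0 -> tau <= dr k <= beta.
Hypothesis tau0 : 0 <= tau.
Hypothesis beta1 : beta < 1.

Lemma qmix_ok xA xC xT xS : 0 <= xA -> 0 <= xC -> 0 <= xT -> 0 <= xS ->
  xA + xC + xT + xS = 1 -> Qok (qmix xA xC xT xS).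
Proof.
move=> hA hC hT hS h1; split.
- move=> a b; rewrite /qmix.
  have := pm_ge0 k0 k0 a b; have := pm_ge0 kb kb a b; have := pm_ge0 k0 kt a b.
  have := pm_ge0 kt k0 a b; have := pm_ge0 k0 kb a b; have := pm_ge0 kb k0 a b.
  nra.
- move=> a b; rewrite /qmix !(pmC _ _ a b); ring.
- by rewrite LL_qmix; lra.
Qed.

Lemma PP_qmix xA xC xT xS : PP (qmix xA xC xT xS) =
  xA + xC * beta + xT / 2 * (1 + tau) + xS / 2 * (1 + beta).
Proof. rewrite /PP LL_qmix dk0 dkb dkt; ring. Qed.

Lemma FF_qmix xA xC xT xS : FF (qmix xA xC xT xS) =
  xA + xT / 2 * tau + xS / 2 * beta.
Proof.
rewrite /FF LL_qmix eqxx (negbTE kb0) (negbTE kt0) dk0 dkb dkt /= mulr1 !mulr0 !add0r; ring.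
Qed.

Lemma g_ok kk c0 e0 :
  0 <= kk - c0 + e0 ->
  (forall l, tau <= l -> l <= beta -> 0 <= kk * l - c0 * (1 + l) + 2 * e0) ->
  (forall l m, tau <= l -> l <= beta -> tau <= m -> m <= beta -> 0 <= - c0 * (l + m) + 2 * e0) ->
  forall a b, 0 <= kk * (dr a * (b == k0)%:R + dr b * (a == k0)%:R)
                     - c0 * (dr a + dr b) + 2 * e0.
Proof.
move=> h1 h2 h3 a b.
have [->|ak] := eqVneq a k0; have [->|bk] := eqVneq b k0.
- rewrite ?eqxx dk0 /=; lra.
- rewrite ?eqxx ?(negbTE bk) dk0 /=; case/andP: (drb bk) => l1 l2; have := h2 _ l1 l2; lra.
- rewrite ?eqxx ?(negbTE ak) dk0 /=; case/andP: (drb ak) => l1 l2; have := h2 _ l1 l2; lra.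
- rewrite ?(negbTE ak) ?(negbTE bk) /=; case/andP: (drb ak) => l1 l2; case/andP: (drb bk) => m1 m2.
  have := h3 _ _ l1 l2 m1 m2; lra.
Qed.

Definition rz (delta z : R) :=
  (exists2 q, Qok q & delta <= PP q /\ FF q = z) /\
  (forall q, Qok q -> delta <= PP q -> z <= FF q).

Lemma FF_ge0 q : Qok q -> 0 <= FF q.
Proof.
move=> qo; have := @LP_dual q 1 0 0 qo.
rewrite !mul0r subr0 mul1r; apply.
apply: g_ok => [|l hl1 hl2|l m hl1 hl2 hm1 hm2]; rewrite ?mul0r ?mulr0 ?mul1r ?mulN1r ?oppr0 ?addr0 ?subr0; try lra. exact: le_trans tau0 hl1.
Qed.

Lemma rz_zero delta : delta <= beta -> rz delta 0.
Proof.
move=> hd; split; last by move=> q qo _; apply: FF_ge0.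
exists (qmix 0 1 0 0); first by apply: qmix_ok; lra.
by rewrite PP_qmix FF_qmix; split; lra.
Qed.

Lemma rz_high delta : (1 + beta) / 2 <= delta <= 1 ->
  rz delta ((delta * (2 - beta) - 1) / (1 - beta)).
Proof.
move=> /andP[d1 d2].
have b1 : 0 < 1 - beta by have := beta1; lra.
have tb : tau <= beta by case/andP: (drb kt0); rewrite dkt; lra.
split.
  pose xS := 2 * (1 - delta) / (1 - beta).
  have hx : xS * (1 - beta) = 2 * (1 - delta) by rewrite /xS divfK // (negbT (gt_eqF b1)).
  have x0 : 0 <= xS by nra.
  have x1 : xS <= 1 by nra.
  exists (qmix (1 - xS) 0 0 xS); first by apply: qmix_ok; lra.
  rewrite PP_qmix FF_qmix; split; first by nra.
  apply: (mulIf (negbT (gt_eqF b1))); rewrite divfK ?(negbT (gt_eqF b1)) //; nra.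
move=> q qo hp.
have := @LP_dual q (1 - beta) (2 - beta) 1 qo.
have hg : forall a b, 0 <= (1 - beta) * (dr a * (b == k0)%:R + dr b * (a == k0)%:R)
                     - (2 - beta) * (dr a + dr b) + 2 * 1.
  apply: g_ok => [|l hl1 hl2|l m hl1 hl2 hm1 hm2]; nra.
move/(_ hg) => h.
rewrite ler_pdivrMr // mulrC; nra.
Qed.


Lemma rz_mid_big delta : 1 / 2 <= beta -> beta <= delta <= (1 + beta) / 2 ->
  rz delta (beta * (delta - beta) / (1 - beta)).
Proof.
move=> hb /andP[d1 d2].
have b1 : 0 < 1 - beta by have := beta1; lra.
have nz := negbT (gt_eqF b1).
split.
  pose xS := 2 * (delta - beta) / (1 - beta).
  have hx : xS * (1 - beta) = 2 * (delta - beta) by rewrite /xS divfK.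
  have x0 : 0 <= xS by nra.
  have x1 : xS <= 1 by nra.
  exists (qmix 0 (1 - xS) 0 xS); first by apply: qmix_ok; lra.
  rewrite PP_qmix FF_qmix; split; first by nra.
  apply: (mulIf nz); rewrite divfK //; nra.
move=> q qo hp.
have := @LP_dual q (1 - beta) beta (beta ^+ 2) qo.
have hg : forall a b, 0 <= (1 - beta) * (dr a * (b == k0)%:R + dr b * (a == k0)%:R)
                     - beta * (dr a + dr b) + 2 * beta ^+ 2.
  apply: g_ok => [|l hl1 hl2|l m hl1 hl2 hm1 hm2]; nra.
move/(_ hg) => h.
rewrite ler_pdivrMr // mulrC; nra.
Qed.

Lemma rz_low_small delta : beta < 1 / 2 -> beta <= delta <= (1 + tau) / 2 ->
  rz delta (tau * (delta - beta) / (1 + tau - 2 * beta)).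
Proof.
move=> hb /andP[d1 d2].
have t0 := tau0.
have b1 : 0 < 1 + tau - 2 * beta by lra.
have nz := negbT (gt_eqF b1).
split.
  pose xT := 2 * (delta - beta) / (1 + tau - 2 * beta).
  have hx : xT * (1 + tau - 2 * beta) = 2 * (delta - beta) by rewrite /xT divfK.
  have x0 : 0 <= xT by nra.
  have x1 : xT <= 1 by nra.
  exists (qmix 0 (1 - xT) xT 0); first by apply: qmix_ok; lra.
  rewrite PP_qmix FF_qmix; split; first by nra.
  apply: (mulIf nz); rewrite divfK //; nra.
move=> q qo hp.
have := @LP_dual q (1 + tau - 2 * beta) tau (tau * beta) qo.
have hg : forall a b, 0 <= (1 + tau - 2 * beta) * (dr a * (b == k0)%:R + dr b * (a == k0)%:R)
                     - tau * (dr a + dr b) + 2 * (tau * beta).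
  have tb : tau <= beta by case/andP: (drb kt0); rewrite dkt.
  apply: g_ok => [|l hl1 hl2|l m hl1 hl2 hm1 hm2].
  - nra.
  - have : 0 <= (1 - 2 * beta) * (l - tau) by apply: mulr_ge0; lra.
    lra.
  - have : 0 <= tau * (2 * beta - l - m) by apply: mulr_ge0; lra.
    lra.
move/(_ hg) => h.
rewrite ler_pdivrMr // mulrC; nra.
Qed.

Lemma rz_mid_small delta : beta < 1 / 2 -> (1 + tau) / 2 <= delta <= (1 + beta) / 2 ->
  rz delta (delta - 1 / 2).
Proof.
move=> hb /andP[d1 d2].
have t0 := tau0.
split.
  have [ebt|nbt] := eqVneq beta tau.
    exists (qmix 0 0 0 1); first by apply: qmix_ok; lra.
    rewrite PP_qmix FF_qmix; split; rewrite -?ebt in d1 *; lra.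
  have tb : tau <= beta by case/andP: (drb kt0); rewrite dkt.
  have b1 : 0 < beta - tau by rewrite lt_def subr_eq0 nbt subr_ge0.
  have nz := negbT (gt_eqF b1).
  pose xS := (2 * delta - 1 - tau) / (beta - tau).
  have hx : xS * (beta - tau) = 2 * delta - 1 - tau by rewrite /xS divfK.
  have x0 : 0 <= xS by nra.
  have x1 : xS <= 1 by nra.
  exists (qmix 0 0 (1 - xS) xS); first by apply: qmix_ok; lra.
  rewrite PP_qmix FF_qmix; split; nra.
move=> q qo hp.
have := @LP_dual q 1 1 (1 / 2) qo.
have hg : forall a b, 0 <= 1 * (dr a * (b == k0)%:R + dr b * (a == k0)%:R)
                     - 1 * (dr a + dr b) + 2 * (1 / 2).
  apply: g_ok => [|l hl1 hl2|l m hl1 hl2 hm1 hm2]; lra.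
move/(_ hg) => h; lra.
Qed.

End LP.

Local Open Scope complex_scope.


Section Quantum.
Variable R : realType.
Local Notation C := (R[i]).

Lemma conj_realC (x : R) : Num.conj (x%:C : C) = x%:C.
Proof. by apply: conj_Creal; apply/complex_realP; exists x. Qed.

Lemma ge0_realC (x : C) : 0 <= x -> x = (complex.Re x)%:C.
Proof. by move=> /ger0_Im; case: x => a b /= ->. Qed.

Variable D : nat.
Variables (U : 'M[C]_D) (d : 'rV[C]_D) (Om : 'M[C]_D) (Psi : 'cV[C]_D).
Variable dr : 'I_D -> R.
Variable k0 : 'I_D.
Hypothesis hU1 : U *m mxadj U = 1%:M.
Hypothesis hU2 : mxadj U *m U = 1%:M.
Hypothesis hOm : Om = mxadj U *m diag_mx d *m U.
Hypothesis hd : forall k, d 0 k = (dr k)%:C.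
Hypothesis hP : U *m (Psi *m mxadj Psi) *m mxadj U = delta_mx k0 k0.

Let V := U *t U.

Lemma VV : V *m mxadj V = 1%:M.
Proof. by rewrite /V mxadj_tens tensmx_mul hU1 tens1mx1. Qed.

Lemma V'V : mxadj V *m V = 1%:M.
Proof. by rewrite /V mxadj_tens tensmx_mul hU2 tens1mx1. Qed.

Lemma tens_conj (A B : 'M[C]_D) :
  (mxadj U *m A *m U) *t (mxadj U *m B *m U) = mxadj V *m (A *t B) *m V.
Proof. by rewrite /V mxadj_tens !tensmx_mul. Qed.

Lemma Om1 : Om *t (1%:M : 'M[C]_D) = mxadj V *m (diag_mx d *t 1%:M) *m V.
Proof. by rewrite -tens_conj -hOm mulmx1 hU2. Qed.

Lemma OmP : Om *t (Psi *m mxadj Psi) = mxadj V *m (diag_mx d *t delta_mx k0 k0) *m V.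
Proof.
rewrite -tens_conj -hOm -hP !mulmxA hU2 mul1mx -mulmxA hU2 mulmx1 //.
Qed.

Lemma tr_conjV (X rho : 'M[C]_(D * D)) :
  \tr ((mxadj V *m X *m V) *m rho) = \tr (X *m (V *m rho *m mxadj V)).
Proof.
by rewrite -!mulmxA mxtrace_mulC !mulmxA.
Qed.

Lemma tr_tens_diag (M : 'M[C]_(D * D)) (B' : 'M[C]_D) :
  (forall i j, i != j -> B' i j = 0) ->
  \tr ((diag_mx d *t B') *m M) =
  \sum_a \sum_b d 0 a * B' b b * M (mxtens_index (a, b)) (mxtens_index (a, b)).
Proof.
move=> hB; rewrite tr_diag_mul; last first.
  move=> x y; case: (mxtens_indexP x) => a b; case: (mxtens_indexP y) => a' b' ne.
  rewrite tensmxE !mxE.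
  have [ea|na] := eqVneq a a'; last by rewrite mulr0n mul0r.
  have [eb|nb] := eqVneq b b'; last by rewrite hB // mulr0.
  by move: ne; rewrite ea eb eqxx.
rewrite sum_tens; apply: eq_bigr => a _; apply: eq_bigr => b _.
by rewrite tensmxE !mxE eqxx mulr1n.
Qed.

Lemma p_formula rho : p_rho Om rho =
  \sum_a \sum_b d 0 a * (V *m rho *m mxadj V) (mxtens_index (a, b)) (mxtens_index (a, b)).
Proof.
rewrite /p_rho Om1 tr_conjV tr_tens_diag.
  by apply: eq_bigr => a _; apply: eq_bigr => b _; rewrite !mxE eqxx mulr1.
by move=> i j /negbTE ne; rewrite !mxE ne.
Qed.

Lemma f_formula rho : f_rho Om Psi rho =
  \sum_a \sum_b d 0 a * (b == k0)%:R *
     (V *m rho *m mxadj V) (mxtens_index (a, b)) (mxtens_index (a, b)).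
Proof.
rewrite /f_rho OmP tr_conjV tr_tens_diag.
  by apply: eq_bigr => a _; apply: eq_bigr => b _; rewrite !mxE andbb.
move=> i j ne; rewrite !mxE.
have [ei|//] := eqVneq i k0; have [ej|//] := eqVneq j k0.
by move: ne; rewrite ei ej eqxx.
Qed.


Let S := swapmx C D.

Lemma SV : S *m V = V *m S.
Proof. by rewrite /S /V swapmx_tens. Qed.

Lemma SV' : S *m mxadj V = mxadj V *m S.
Proof. by rewrite /S /V mxadj_tens swapmx_tens. Qed.

Lemma swi_index (a b : 'I_D) : swi (mxtens_index (a, b)) = mxtens_index (b, a).
Proof. by rewrite /swi mxtens_indexK. Qed.

Lemma swi_inj : injective (@swi D).
Proof. exact: inv_inj (@swiK D). Qed.

Definition Mof rho := V *m rho *m mxadj V.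
Definition qof rho (a b : 'I_D) := complex.Re (Mof rho (mxtens_index (a, b)) (mxtens_index (a, b))).

Lemma sum2C (G : 'I_D -> 'I_D -> R) :
  (\sum_a \sum_b G a b)%:C = \sum_a \sum_b (G a b)%:C.
Proof.
rewrite rmorph_sum; apply: eq_bigr => a _; by rewrite rmorph_sum.
Qed.

Lemma Mof_real rho : psdmx rho -> forall a b,
  Mof rho (mxtens_index (a, b)) (mxtens_index (a, b)) = (qof rho a b)%:C.
Proof.
move=> hr a b; apply: ge0_realC; apply: psd_diag; exact: psd_conj.
Qed.

Lemma tr_Mof rho : \tr (Mof rho) = \tr rho.
Proof. by rewrite /Mof mxtrace_mulC mulmxA V'V mul1mx. Qed.

Lemma LB rho delta : feasible1 Om delta%:C rho ->
  [/\ Qok (qof rho), delta <= PP dr (qof rho) & f_rho Om Psi rho = (FF dr k0 (qof rho))%:C].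
Proof.
case=> [[hps htr] hperm hp].
have Mr := Mof_real hps.
have pE : p_rho Om rho = (PP dr (qof rho))%:C.
  rewrite p_formula /PP /LL sum2C; apply: eq_bigr => a _; apply: eq_bigr => b _.
  by rewrite -/(Mof rho) Mr hd rmorphM.
have fE : f_rho Om Psi rho = (FF dr k0 (qof rho))%:C.
  rewrite f_formula /FF /LL sum2C; apply: eq_bigr => a _; apply: eq_bigr => b _.
  by rewrite -/(Mof rho) Mr hd !rmorphM /= rmorph_nat.
split => //; last by move: hp; rewrite pE lecR.
split.
- move=> a b; rewrite /qof.
  have := psd_diag (mxtens_index (a, b)) (psd_conj V hps).
  by rewrite lecE /= => /andP[].
- move=> a b; apply: complexI; rewrite -!Mr.
  have EM : Mof rho = S *m Mof rho *m S.
    rewrite /Mof -{1}hperm swapmx_adj -/S.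
    by rewrite !mulmxA -SV -!mulmxA SV'.
  by rewrite {1}EM /S swapmx_mulr swapmx_mull swi_index.
- apply: complexI; rewrite rmorph1 /LL sum2C -htr -tr_Mof /mxtrace sum_tens.
  apply: eq_bigr => a _; apply: eq_bigr => b _; by rewrite mul1r Mr.
Qed.


Definition Qd (q : 'I_D -> 'I_D -> R) : 'M[C]_(D * D) :=
  diag_mx (\row_x (q (mxtens_unindex x).1 (mxtens_unindex x).2)%:C).

Lemma Qd_psd q : (forall a b, 0 <= q a b) -> psdmx (Qd q).
Proof.
move=> q0; split.
  apply/matrixP => x y; rewrite mxadjE !mxE eq_sym.
  have [->|_] := eqVneq x y; last by rewrite !mulr0n conjC0.
  by rewrite !mulr1n conj_realC.
move=> v; rewrite mxE; apply: sumr_ge0 => x _.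
rewrite mul_mx_diag !mxE.
rewrite mulrC mulrA; apply: mulr_ge0; first exact: mul_conjC_ge0.
by rewrite lecR.
Qed.

Lemma ACH q : Qok q -> exists rho,
  [/\ densitymx rho, perm_invariant2 rho, p_rho Om rho = (PP dr q)%:C
    & f_rho Om Psi rho = (FF dr k0 q)%:C].
Proof.
case=> q0 qs q1.
pose rho := mxadj V *m Qd q *m V.
have Mr : Mof rho = Qd q by rewrite /Mof /rho !mulmxA VV mul1mx -mulmxA VV mulmx1.
have Mq : forall a b, Mof rho (mxtens_index (a, b)) (mxtens_index (a, b)) = (q a b)%:C.
  by move=> a b; rewrite Mr !mxE eqxx mulr1n mxtens_indexK.
exists rho; split.
- split.
    have := psd_conj (mxadj V) (Qd_psd q0); by rewrite mxadjK.
  rewrite /rho mxtrace_mulC mulmxA VV mul1mx /Qd mxtrace_diag.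
  have -> : (1 : C) = (LL (fun _ _ => 1) q)%:C by rewrite q1.
  rewrite /LL sum2C sum_tens.
  by apply: eq_bigr => a _; apply: eq_bigr => b _; rewrite mxE mxtens_indexK mul1r.
- rewrite /perm_invariant2 swapmx_adj -/S /rho.
  have SQ : S *m Qd q *m S = Qd q.
    apply/matrixP => x y; rewrite /S swapmx_mulr swapmx_mull !mxE.
    rewrite (inj_eq swi_inj); congr (_ *+ _).
    by case: (mxtens_indexP x) => a b; rewrite swi_index !mxtens_indexK /= qs.
  have -> : S *m (mxadj V *m Qd q *m V) *m S = mxadj V *m (S *m Qd q *m S) *m V.
    by rewrite !mulmxA SV' -!mulmxA SV.
  by rewrite SQ.
- rewrite p_formula /PP /LL sum2C; apply: eq_bigr => a _; apply: eq_bigr => b _.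
  by rewrite -/(Mof rho) Mq hd rmorphM.
- rewrite f_formula /FF /LL sum2C; apply: eq_bigr => a _; apply: eq_bigr => b _.
  by rewrite -/(Mof rho) Mq hd !rmorphM /= rmorph_nat.
Qed.

Lemma reduce delta z : rz dr k0 delta z -> zeta1_is Om Psi delta%:C z%:C.
Proof.
case=> [[q qo [hp hf]] hlb]; split.
  have [rho [hd1 hp1 hpE hfE]] := ACH qo.
  exists rho; first by split => //; rewrite hpE lecR.
  by rewrite hfE hf.
move=> rho hf1; have [qo2 hp2 hfE] := LB hf1.
by rewrite hfE lecR; apply: hlb.
Qed.

End Quantum.


Section Facts.
Variable R : realType.
Local Notation C := (R[i]).
Variable D : nat.
Variables (U : 'M[C]_D) (d : 'rV[C]_D) (Om : 'M[C]_D) (Psi : 'cV[C]_D).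
Variable lam : nat -> R.
Hypothesis hU1 : U *m mxadj U = 1%:M.
Hypothesis hU2 : mxadj U *m U = 1%:M.
Hypothesis hOm : Om = mxadj U *m diag_mx d *m U.
Hypothesis hchar : char_poly Om = \prod_(k < D) ('X - ((lam k)%:C)%:P).

Lemma UOm : U *m Om = diag_mx d *m U.
Proof. by rewrite hOm !mulmxA hU1 mul1mx. Qed.

Lemma row_eig k : row k U *m Om = d 0 k *: row k U.
Proof.
rewrite -row_mul UOm; apply/rowP => j; rewrite !mxE.
rewrite (bigD1 k) //= big1 ?addr0; first by rewrite !mxE eqxx mulr1n.
by move=> i /negbTE ik; rewrite !mxE eq_sym ik mulr0n mul0r.
Qed.

Lemma row_norm k : (row k U *m mxadj (row k U)) 0 0 = 1.
Proof.
have := congr1 (fun M : 'M[C]_D => M k k) hU1; rewrite /= !mxE eqxx /= => h.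
by rewrite -[RHS]h; apply: eq_bigr => j _; rewrite !mxE.
Qed.

Lemma row_neq0 k : row k U != 0.
Proof.
apply/negP => /eqP e; have := row_norm k; rewrite e mul0mx mxE => /eqP.
by rewrite eq_sym oner_eq0.
Qed.

Lemma root_lam (x : C) : eigenvalue Om x -> exists2 j, (j < D)%N & x = (lam j)%:C.
Proof.
rewrite eigenvalue_root_char hchar /root horner_prod.
case/prodf_eq0 => j _; rewrite hornerXsubC subr_eq0 => /eqP ->.
by exists j.
Qed.

Lemma d_lam k : exists2 j, (j < D)%N & d 0 k = (lam j)%:C.
Proof. apply: root_lam; apply/eigenvalueP; exists (row k U); [exact: row_eig | exact: row_neq0]. Qed.

Lemma lam_d j : (j < D)%N -> exists k, d 0 k = (lam j)%:C.
Proof.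
move=> jD.
have : eigenvalue Om (lam j)%:C.
  rewrite eigenvalue_root_char hchar /root horner_prod; apply/prodf_eq0.
  by exists (Ordinal jD) => //; rewrite hornerXsubC subrr.
case/eigenvalueP => v hv vn0.
set u := v *m mxadj U.
have hu : u *m diag_mx d = (lam j)%:C *: u.
  by rewrite /u scalemxAl -hv hOm !mulmxA -(mulmxA _ U (mxadj U)) hU1 mulmx1.
have un0 : u != 0.
  apply: contraNneq vn0 => u0.
  by rewrite -(mulmx1 v) -hU2 mulmxA -/u u0 mul0mx.
clearbody u.
case/matrix0Pn: un0 => i [k uk]; move: uk; rewrite (ord1 i) => uk.
exists k; have := congr1 (fun M : 'rV[C]_D => M 0 k) hu; rewrite /= mul_mx_diag !mxE.
by rewrite mulrC => /(mulIf uk).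
Qed.


Lemma mxadjZ m n (c : C) (A : 'M[C]_(m, n)) : mxadj (c *: A) = Num.conj c *: mxadj A.
Proof. by apply/matrixP => i j; rewrite !mxE rmorphM. Qed.

Hypothesis hPsi : mxadj Psi *m Psi = 1%:M.
Hypothesis hV : verification_operator Om Psi.

Lemma d_ge0 k : 0 <= d 0 k.
Proof.
case: hV => _ [_ pO] _ _ _.
have := pO (mxadj (row k U)); rewrite mxadjK row_eig -scalemxAl mxE row_norm.
by rewrite mulr1.
Qed.

Let w := U *m Psi.

Lemma w_fix k : d 0 k * w k 0 = w k 0.
Proof.
case: hV => _ _ _ hOP _.
have := congr1 (fun M : 'cV[C]_D => M k 0) (congr1 (mulmx U) hOP).
by rewrite /= mulmxA UOm -mulmxA mul_diag_mx mxE.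
Qed.

Lemma w_zero k : d 0 k != 1 -> w k 0 = 0.
Proof.
move=> dk; have := w_fix k; move/eqP; rewrite -subr_eq0 -{2}[w k 0]mul1r -mulrBl.
by rewrite mulf_eq0 subr_eq0 (negbTE dk) /= => /eqP.
Qed.

Lemma w_one k : d 0 k = 1 -> w k 0 * Num.conj (w k 0) = 1.
Proof.
move=> dk; case: hV => hO _ _ _ nd.
set r := row k U.
have rO : r *m Om = r by rewrite /r row_eig dk scale1r.
have : Om *m mxadj r = mxadj r.
  by have := congr1 (@mxadj C 1 D) rO; rewrite mxadjM hO.
case/nd => c hc.
have er : r = Num.conj c *: mxadj Psi by rewrite -[r]mxadjK hc mxadjZ.
have wk : w k 0 = Num.conj c.
  have -> : w k 0 = (r *m Psi) 0 0 by rewrite /w /r !mxE; apply: eq_bigr => j _; rewrite !mxE.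
  by rewrite er -scalemxAl hPsi !mxE eqxx mulr1.
have h : Num.conj c * c = 1.
  by have := row_norm k; rewrite -/r hc er -scalemxAl -scalemxAr hPsi !mxE eqxx mulr1. 
by rewrite wk conjCK.
Qed.

Lemma w_norm : \sum_k w k 0 * Num.conj (w k 0) = 1.
Proof.
have : mxadj w *m w = 1%:M by rewrite /w mxadjM mulmxA -(mulmxA _ (mxadj U)) hU2 mulmx1 hPsi.
move/(congr1 (fun M : 'M[C]_1 => M 0 0)) => /= h.
rewrite (_ : 1 = (1%:M : 'M[C]_1) 0 0); last by rewrite mxE.
rewrite -h /w !mxE; apply: eq_bigr => i _; rewrite !mxE mulrC.
by congr (_ * _); rewrite rmorph_sum; apply: eq_bigr => j _; rewrite !mxE.
Qed.

Lemma outer_entry (x : 'cV[C]_D) a b : (x *m mxadj x) a b = x a 0 * Num.conj (x b 0).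
Proof. by rewrite !mxE big_ord1 !mxE. Qed.

Lemma k0_exists : exists k0,
  [/\ d 0 k0 = 1, forall k, k != k0 -> d 0 k != 1 &
      U *m (Psi *m mxadj Psi) *m mxadj U = delta_mx k0 k0].
Proof.
have hc : #|[pred k | d 0 k == 1]| = 1%N.
  have : (#|[pred k | d 0 k == 1]|%:R : C) = 1.
    rewrite -[RHS]w_norm -sum1_card natr_sum big_mkcond /=; apply: eq_bigr => k _.
    have [dk|dk] := eqVneq (d 0 k) 1.
      by rewrite inE dk eqxx w_one.
    by rewrite inE (negbTE dk) w_zero // mul0r.
  by move/eqP; rewrite pnatr_eq1 => /eqP.
have [k0 hk0] := mem_card1 hc.
have dk0 : d 0 k0 = 1 by have := hk0 k0; rewrite !inE eqxx => /eqP.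
have dk : forall k, k != k0 -> d 0 k != 1.
  by move=> k kn; have := hk0 k; rewrite !inE (negbTE kn) => ->.
exists k0; split => //.
have -> : U *m (Psi *m mxadj Psi) *m mxadj U = w *m mxadj w by rewrite /w mxadjM !mulmxA.
apply/matrixP => a b; rewrite outer_entry [RHS]mxE.
have [ea|na] := eqVneq a k0; last by rewrite (w_zero (dk _ na)) mul0r.
have [eb|nb] := eqVneq b k0; last by rewrite (w_zero (dk _ nb)) conjC0 mulr0 andbF.
by rewrite ea eb w_one.
Qed.

End Facts.

Unset Implicit Arguments.
Set Strict Implicit.
Set Printing Implicit Defensive.

Theorem theorem4 (R : realType) (D : nat) (Omega : 'M[R[i]]_D) (Psi : 'cV[R[i]]_D)
    (lam : nat -> R) :
  (2 <= D)%N ->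
  mxadj Psi *m Psi = 1%:M ->
  verification_operator Omega Psi ->
  sorted_spectrum Omega lam ->
  lam 0%N = 1 -> lam 1%N < 1 ->
  let beta := lam 1%N in
  let tau := lam D.-1 in
  (1 / 2 <= beta ->
     forall delta : R,
       (0 <= delta <= beta -> zeta1_is Omega Psi delta%:C 0) /\
       (beta <= delta <= (1 + beta) / 2 ->
          zeta1_is Omega Psi delta%:C (beta * (delta - beta) / (1 - beta))%:C) /\
       ((1 + beta) / 2 <= delta <= 1 ->
          zeta1_is Omega Psi delta%:C ((delta * (2 - beta) - 1) / (1 - beta))%:C)) /\
  (beta < 1 / 2 ->
     forall delta : R,
       (0 <= delta <= beta -> zeta1_is Omega Psi delta%:C 0) /\
       (beta <= delta <= (1 + tau) / 2 ->
          zeta1_is Omega Psi delta%:C (tau * (delta - beta) / (1 + tau - 2 * beta))%:C) /\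
       ((1 + tau) / 2 <= delta <= (1 + beta) / 2 ->
          zeta1_is Omega Psi delta%:C (delta - 1 / 2)%:C) /\
       ((1 + beta) / 2 <= delta <= 1 ->
          zeta1_is Omega Psi delta%:C ((delta * (2 - beta) - 1) / (1 - beta))%:C)).
Proof.
move=> hD hPsi hV [hchar hsort] h0 h1 beta tau.
have hO : Defs.hermitian Omega by case: hV.
have [U [d [hU1 hU2 hOm]]] := spectral_dec hO.
have [k0 [dk0 dk hP]] := k0_exists hU1 hU2 hOm hPsi hV.
pose dr k := complex.Re (d 0 k).
have hd : forall k, d 0 k = (dr k)%:C.
  by move=> k; rewrite /dr; have [j _ ->] := d_lam hU1 hOm hchar k.
have drk0 : dr k0 = 1 by rewrite /dr dk0.
have D1 : (1 < D)%N by [].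
have DD : (D.-1 < D)%N by rewrite prednK ?ltnSn // (ltn_trans _ D1).
have [kb hkb] := lam_d hU1 hU2 hOm hchar D1.
have [kt hkt] := lam_d hU1 hU2 hOm hchar DD.
have dkb : dr kb = beta by rewrite /dr hkb.
have dkt : dr kt = tau by rewrite /dr hkt.
have tb : tau <= beta by apply: hsort => //; rewrite -ltnS prednK // (ltn_trans _ D1).
have kb0 : kb != k0.
  apply/eqP => e; move: hkb; rewrite e dk0 => /(congr1 (@complex.Re R)) /= e1.
  by move: h1; rewrite -e1 ltxx.
have kt0 : kt != k0.
  apply/eqP => e; move: hkt; rewrite e dk0 => /(congr1 (@complex.Re R)) /= e1.
  have : tau < 1 by apply: le_lt_trans tb h1.
  by rewrite /tau -e1 ltxx.
have drb : forall k, k != k0 -> tau <= dr k <= beta.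
  move=> k kn; have [j jD hj] := d_lam hU1 hOm hchar k.
  have j0 : j != 0%N.
    by apply: contraNneq (dk _ kn) => e; rewrite hj e h0.
  rewrite /dr hj /=; apply/andP; split.
    by apply: hsort => //; rewrite -ltnS prednK // (ltn_trans _ D1).
  by apply: hsort => //; rewrite lt0n.
have tau0 : 0 <= tau.
  by have := d_ge0 hU1 hOm hV kt; rewrite hd dkt lecR.
have red := reduce hU1 hU2 hOm hd hP.
have z0 : forall delta, 0 <= delta <= beta -> zeta1_is Omega Psi delta%:C 0.
  move=> delta /andP[_ hdel]; apply: (red _ 0).
  exact: (rz_zero drk0 dkb dkt kb0 kt0 drb tau0).
split => hb delta.
  split; [exact: z0|split => hdel].
  - by apply: red; apply: (rz_mid_big drk0 dkb dkt kb0 kt0 drb h1).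
  - by apply: red; apply: (rz_high drk0 dkb dkt kb0 kt0 drb h1).
split; [exact: z0|split; [|split] => hdel].
- by apply: red; apply: (rz_low_small drk0 dkb dkt kb0 kt0 drb tau0).
- by apply: red; apply: (rz_mid_small drk0 dkb dkt kb0 kt0 drb tau0).
- by apply: red; apply: (rz_high drk0 dkb dkt kb0 kt0 drb h1).
Qed.
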